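(* For any $f\in\mathcal{E}$ with $f\neq\mathrm{id}$, the index $[\mathcal{E}:C(f)]$ is uncountable, where $C(f)=\{g\in\mathcal{E}:fg=gf\}$.
   Context: Identify $\mathbb{T}^1=\mathbb{R}/\mathbb{Z}$ with $[0,1)$. An interval exchange transformation is a bijection of $\mathbb{T}^1$ that is a translation on each piece of some partition of $[0,1)$ into finitely many half-open intervals $[a,b)$; $\mathcal{E}$ is the group of these under composition. *)

(* Defs.v *)
From Stdlib Require Import Reals.
Open Scope R_scope.

(* The circle T^1 = R/Z identified with [0,1). *)
Definition I01 : Type := {x : R | 0 <= x < 1}.

Definition val01 (x : I01) : R := proj1_sig x.

Definition bij01 (f : I01 -> I01) : Prop :=
  exists g : I01 -> I01, (forall x, g (f x) = x) /\ (forall y, f (g y) = y).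

Definition is_IET (f : I01 -> I01) : Prop :=
  bij01 f /\
  exists (n : nat) (a t : nat -> R),
    a 0%nat = 0 /\ a n = 1 /\
    (forall i, (i < n)%nat -> a i < a (S i)) /\
    (forall (x : I01) (i : nat), (i < n)%nat ->
       a i <= val01 x < a (S i) ->
       val01 (f x) = frac_part (val01 x + t i)).

Definition in_centralizer (f g : I01 -> I01) : Prop :=
  is_IET g /\ (forall x, f (g x) = g (f x)).

(* [E : C(f)] is countable (finite or countably infinite): there is a
   sequence of elements of E meeting every left coset h C(f) of C(f) in E,
   i.e. every g in E is of the form c_n o k with k in C(f). *)
Definition countable_index_centralizer (f : I01 -> I01) : Prop :=
  exists c : nat -> (I01 -> I01),
    (forall n, is_IET (c n)) /\
    (forall g, is_IET g ->
       exists n k, in_centralizer f k /\ (forall x, g x = c n (k x))).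

(* Main.v *)
Require Import Defs.
From Stdlib Require Import Reals.
From Stdlib Require Import Lra Lia ProofIrrelevance Classical IndefiniteDescription.
Open Scope R_scope.

Lemma frac_id (r : R) : 0 <= r < 1 -> frac_part r = r.
Proof.
  intros H. destruct (Int_part_frac_part_spec r 0 r H) as [_ E].
  - simpl; ring.
  - now rewrite <- E.
Qed.

Lemma val_inj (x y : I01) : val01 x = val01 y -> x = y.
Proof.
  destruct x as [x hx], y as [y hy]; unfold val01; simpl; intros ->.
  f_equal; apply proof_irrelevance.
Qed.

Definition rho (al be u x : R) : R :=
  if Rlt_dec x al then x else
  if Rlt_dec x (be - u) then x + u else
  if Rlt_dec x be then x + u - (be - al) else x.

Lemma rho_cases al be u x :
  (x < al /\ rho al be u x = x) \/
  (al <= x < be - u /\ rho al be u x = x + u) \/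
  (be - u <= x < be /\ al <= x /\ rho al be u x = x + u - (be - al)) \/
  (be <= x /\ al <= x /\ rho al be u x = x).
Proof.
  unfold rho.
  destruct (Rlt_dec x al); [left; split; auto|].
  destruct (Rlt_dec x (be - u)); [right; left; split; [lra|auto]|].
  destruct (Rlt_dec x be); [right; right; left; repeat split; lra|].
  right; right; right; repeat split; lra.
Qed.

Definition toI (r : R) : I01.
Proof.
  exists (frac_part r). destruct (base_fp r). lra.
Defined.

Definition rot (al be u : R) (x : I01) : I01 := toI (rho al be u (val01 x)).

Lemma val01_range (x : I01) : 0 <= val01 x < 1.
Proof. destruct x; simpl; auto. Qed.

Lemma val_rot al be u x : 0 <= al < be -> be <= 1 -> 0 < u < be - al ->
  val01 (rot al be u x) = rho al be u (val01 x).
Proof.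
  intros H1 H2 H3. unfold rot, toI, val01 at 1; simpl. apply frac_id.
  pose proof (val01_range x).
  destruct (rho_cases al be u (val01 x)) as [[A E]|[[A E]|[[A [B E]]|[A [B E]]]]];
    rewrite E; lra.
Qed.

Lemma rot_inv al be u x : 0 <= al < be -> be <= 1 -> 0 < u < be - al ->
  rot al be (be - al - u) (rot al be u x) = x.
Proof.
  intros H1 H2 H3. apply val_inj.
  rewrite val_rot by lra. rewrite val_rot by lra.
  pose proof (val01_range x).
  set (y := val01 x).
  destruct (rho_cases al be u y) as [[A E]|[[A E]|[[A [B E]]|[A [B E]]]]];
  destruct (rho_cases al be (be - al - u) (rho al be u y))
    as [[A' E']|[[A' E']|[[A' [B' E']]|[A' [B' E']]]]]; lra.
Qed.

Lemma rot_bij al be u : 0 <= al < be -> be <= 1 -> 0 < u < be - al ->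
  bij01 (rot al be u).
Proof.
  intros H1 H2 H3. exists (rot al be (be - al - u)). split; intros x.
  - apply rot_inv; lra.
  - pose proof (rot_inv al be (be - al - u) x H1 H2 ltac:(lra)) as E.
    replace (be - al - (be - al - u)) with u in E by ring. exact E.
Qed.

Lemma IET3 (g : I01 -> I01) (a1 a2 t0 t1 t2 : R) :
  0 < a1 < a2 -> a2 < 1 -> bij01 g ->
  (forall x, val01 x < a1 -> val01 (g x) = val01 x + t0) ->
  (forall x, a1 <= val01 x < a2 -> val01 (g x) = val01 x + t1) ->
  (forall x, a2 <= val01 x -> val01 (g x) = val01 x + t2) ->
  is_IET g.
Proof.
  intros Ha Hb Hg P0 P1 P2. split; [exact Hg|].
  exists 3%nat, (fun i => match i with 0%nat => 0 | 1%nat => a1 | 2%nat => a2 | _ => 1 end),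
    (fun i => match i with 0%nat => t0 | 1%nat => t1 | _ => t2 end).
  split; [reflexivity|]. split; [reflexivity|]. split.
  - intros i Hi. destruct i as [|[|[|i]]]; try lra; lia.
  - intros x i Hi Hx. pose proof (val01_range (g x)).
    destruct i as [|[|[|i]]]; try lia.
    + rewrite P0 in * by lra. rewrite frac_id; lra.
    + rewrite P1 in * by lra. rewrite frac_id; lra.
    + rewrite P2 in * by lra. rewrite frac_id; lra.
Qed.

Definition step (v : R) (p : R * R) : R * R :=
  let a := fst p in let b := snd p in let L := (b - a) / 3 in
  if Rle_dec a v then (if Rle_dec v (a + L) then (b - L, b) else (a, a + L))
  else (a, a + L).

Lemma step_spec v p : fst p < snd p ->
  fst p <= fst (step v p) /\ fst (step v p) < snd (step v p) /\
  snd (step v p) <= snd p /\ ~ (fst (step v p) <= v <= snd (step v p)).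
Proof.
  intros H. unfold step.
  destruct (Rle_dec (fst p) v); [destruct (Rle_dec v (fst p + (snd p - fst p) / 3))|];
    simpl; lra.
Qed.

Fixpoint nest (u : nat -> R) (lo hi : R) (n : nat) : R * R :=
  match n with O => (lo, hi) | S k => step (u k) (nest u lo hi k) end.

Lemma nest_lt u lo hi n : lo < hi -> fst (nest u lo hi n) < snd (nest u lo hi n).
Proof.
  intros H; induction n; simpl; auto. apply (step_spec (u n) _ IHn).
Qed.

Lemma nest_mono u lo hi n m : lo < hi -> (n <= m)%nat ->
  fst (nest u lo hi n) <= fst (nest u lo hi m) /\ snd (nest u lo hi m) <= snd (nest u lo hi n).
Proof.
  intros H Hnm. induction Hnm; [lra|].
  simpl. pose proof (step_spec (u m) _ (nest_lt u lo hi m H)). lra.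
Qed.

Lemma nest_fst_snd u lo hi k j : lo < hi -> fst (nest u lo hi k) <= snd (nest u lo hi j).
Proof.
  intros H. destruct (nest_mono u lo hi k (max k j) H ltac:(lia)).
  destruct (nest_mono u lo hi j (max k j) H ltac:(lia)).
  pose proof (nest_lt u lo hi (max k j) H). lra.
Qed.

Lemma avoid (u : nat -> R) (lo hi : R) : lo < hi ->
  exists x, lo <= x <= hi /\ forall n, u n <> x.
Proof.
  intros H.
  set (E := fun y => exists k, y = fst (nest u lo hi k)).
  assert (Hb : bound E).
  { exists hi. intros y [k ->]. apply (nest_fst_snd u lo hi k 0 H). }
  assert (Hne : exists y, E y) by (exists lo; exists 0%nat; reflexivity).
  destruct (completeness E Hb Hne) as [x [Hub Hlub]].
  assert (Hl : forall k, fst (nest u lo hi k) <= x) by (intros k; apply Hub; exists k; auto).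
  assert (Hr : forall j, x <= snd (nest u lo hi j)).
  { intros j. apply Hlub. intros y [k ->]. apply nest_fst_snd; auto. }
  exists x. split.
  - split; [apply (Hl 0%nat)|apply (Hr 0%nat)].
  - intros n Hn. destruct (step_spec (u n) _ (nest_lt u lo hi n H)) as [_ [_ [_ C]]].
    apply C. pose proof (Hl (S n)); pose proof (Hr (S n)); simpl in *. rewrite <- Hn in *; split; assumption.
Qed.

Theorem corollary5p9 (f : I01 -> I01) :
  is_IET f -> ~ (forall x, f x = x) -> ~ countable_index_centralizer f.
Proof.
  intros Hf Hnid [c [Hc Hall]].
  destruct (not_all_ex_not _ _ Hnid) as [x0 Hx0].
  assert (Hs : forall n, exists y, c n y = x0).
  { intros n. destruct (Hc n) as [[d [_ Hd]] _]. exists (d x0). apply Hd. }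
  set (cinv := fun n => proj1_sig (constructive_indefinite_description _ (Hs n))).
  assert (Hcinv : forall n, c n (cinv n) = x0).
  { intros n. unfold cinv. destruct (constructive_indefinite_description _ (Hs n)); auto. }
  assert (Key : forall g, is_IET g -> g x0 = x0 -> exists n, g (f x0) = c n (f (cinv n))).
  { intros g Hg Hgx. destruct (Hall g Hg) as [n [k [[_ Hk] Hgk]]]. exists n.
    rewrite Hgk. destruct (Hc n) as [[d [Hd _]] _].
    assert (k x0 = cinv n).
    { rewrite <- (Hd (k x0)), <- (Hd (cinv n)), <- Hgk, Hgx, Hcinv. reflexivity. }
    rewrite <- Hk, H. reflexivity. }
  set (p := val01 x0). set (q := val01 (f x0)).
  assert (Hpq : p <> q) by (intro E; apply Hx0; apply val_inj; auto).
  pose proof (val01_range x0) as Rp. pose proof (val01_range (f x0)) as Rq.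
  fold p in Rp. fold q in Rq.
  set (u := fun n => val01 (c n (f (cinv n))) - q).
  destruct (Rlt_dec p q) as [Hlt|Hge].
  - set (m := (p + q) / 2).
    destruct (avoid u ((1 - q) / 4) ((1 - q) / 3) ltac:(lra)) as [s [Hs1 Hs2]].
    assert (Hbij := rot_bij m 1 s ltac:(unfold m; lra) ltac:(lra) ltac:(unfold m; lra)).
    assert (HI : is_IET (rot m 1 s)).
    { apply (IET3 _ m (1 - s) 0 s (s - (1 - m))); try (unfold m; lra); auto.
      all: intros x Hx; rewrite val_rot by (unfold m; lra);
        pose proof (val01_range x);
        destruct (rho_cases m 1 s (val01 x)) as [[A E]|[[A E]|[[A [B E]]|[A [B E]]]]];
        unfold m in *; lra. }
    assert (Hfix : rot m 1 s x0 = x0).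
    { apply val_inj. rewrite val_rot by (unfold m; lra). fold p.
      destruct (rho_cases m 1 s p) as [[A E]|[[A E]|[[A [B E]]|[A [B E]]]]];
        unfold m in *; lra. }
    destruct (Key _ HI Hfix) as [n Hn].
    apply (Hs2 n). unfold u. rewrite <- Hn. rewrite val_rot by (unfold m; lra). fold q.
    destruct (rho_cases m 1 s q) as [[A E]|[[A E]|[[A [B E]]|[A [B E]]]]];
      unfold m in *; lra.
  - assert (Hlt : q < p) by lra.
    set (m := (p + q) / 2).
    destruct (avoid u ((m - q) / 4) ((m - q) / 2) ltac:(unfold m; lra)) as [s [Hs1 Hs2]].
    assert (Hbij := rot_bij 0 m s ltac:(unfold m; lra) ltac:(unfold m; lra) ltac:(unfold m in *; lra)).
    assert (HI : is_IET (rot 0 m s)).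
    { apply (IET3 _ (m - s) m s (s - m) 0); try (unfold m in *; lra); auto.
      all: intros x Hx; rewrite val_rot by (unfold m in *; lra);
        pose proof (val01_range x);
        destruct (rho_cases 0 m s (val01 x)) as [[A E]|[[A E]|[[A [B E]]|[A [B E]]]]];
        unfold m in *; lra. }
    assert (Hfix : rot 0 m s x0 = x0).
    { apply val_inj. rewrite val_rot by (unfold m in *; lra). fold p.
      destruct (rho_cases 0 m s p) as [[A E]|[[A E]|[[A [B E]]|[A [B E]]]]];
        unfold m in *; lra. }
    destruct (Key _ HI Hfix) as [n Hn].
    apply (Hs2 n). unfold u. rewrite <- Hn. rewrite val_rot by (unfold m in *; lra). fold q.
    destruct (rho_cases 0 m s q) as [[A E]|[[A E]|[[A [B E]]|[A [B E]]]]];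
      unfold m in *; lra.
Qed.
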